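(* Let $R$ be a commutative Noetherian ring with unity such that $\Gamma_E(R)$ has more than three vertices. Then no associated prime of $R$ is a leaf of $\Gamma_E(R)$; that is, if $y\in R$ and $\operatorname{ann}(y)$ is a prime ideal, then $\deg[y]\neq 1$.
   Context: For $x,y\in R$ write $x\sim y$ iff $\operatorname{ann}(x)=\operatorname{ann}(y)$; $[x]$ denotes the equivalence class of $x$. Let $Z^*(R)$ be the set of nonzero zero divisors of $R$. The graph $\Gamma_E(R)$ is the simple graph whose vertices are the classes $[x]$ with $x\in Z^*(R)$, two distinct vertices $[x],[y]$ being adjacent iff $xy=0$. An associated prime $\operatorname{ann}(y)$ is identified with the vertex $[y]$. A leaf is a vertex of degree $1$. *)

(* Defs.v *)
From mathcomp Require Import all_boot all_order all_algebra.
Set Implicit Arguments. Unset Strict Implicit. Unset Printing Implicit Defensive.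
Import GRing.Theory.
Local Open Scope ring_scope.

Definition is_ideal (R : comPzRingType) (I : R -> Prop) : Prop :=
  I 0 /\ (forall x y, I x -> I y -> I (x - y)) /\ (forall a x, I x -> I (a * x)).

Definition noetherian (R : comPzRingType) : Prop :=
  forall I : nat -> R -> Prop,
    (forall n, is_ideal (I n)) ->
    (forall n x, I n x -> I n.+1 x) ->
    exists N : nat, forall n x, (N <= n)%N -> I n x -> I N x.

Definition prime_ideal (R : comPzRingType) (P : R -> Prop) : Prop :=
  is_ideal P /\ ~ P 1 /\ (forall a b, P (a * b) -> P a \/ P b).

Definition ann (R : comPzRingType) (y : R) : R -> Prop := fun a => a * y = 0.

Definition ann_equiv (R : comPzRingType) (x y : R) : Prop :=
  forall a : R, ann x a <-> ann y a.

Definition nz_zero_divisor (R : comPzRingType) (x : R) : Prop :=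
  x != 0 /\ exists z : R, z != 0 /\ x * z = 0.

(* Gamma_E(R) has more than three vertices: there are four nonzero zero
   divisors with pairwise distinct annihilator classes. *)
Definition GammaE_more_than_three_vertices (R : comPzRingType) : Prop :=
  exists x1 x2 x3 x4 : R,
    [/\ nz_zero_divisor x1, nz_zero_divisor x2, nz_zero_divisor x3
      & nz_zero_divisor x4] /\
    (~ ann_equiv x1 x2 /\ ~ ann_equiv x1 x3 /\ ~ ann_equiv x1 x4 /\
     ~ ann_equiv x2 x3 /\ ~ ann_equiv x2 x4 /\ ~ ann_equiv x3 x4).

(* Neighbours of [y] in Gamma_E(R): vertices [x] (x in Z^*(R)), [x] <> [y],
   with x y = 0 (well defined on classes). *)
Definition GammaE_adj (R : comPzRingType) (x y : R) : Prop :=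
  nz_zero_divisor x /\ ~ ann_equiv x y /\ x * y = 0.

(* [y] is a leaf: it has exactly one neighbouring vertex (class). *)
Definition GammaE_leaf (R : comPzRingType) (y : R) : Prop :=
  exists x : R, GammaE_adj x y /\ forall z : R, GammaE_adj z y -> ann_equiv z x.

(* Main.v *)
Require Import Defs.
From mathcomp Require Import all_boot all_order all_algebra.
From Stdlib Require Import Classical.
Import GRing.Theory.
Local Open Scope ring_scope.

Lemma ae_sym (R : comPzRingType) (u v : R) : ann_equiv u v -> ann_equiv v u.
Proof. by move=> h a; split=> /h. Qed.

Lemma ae_trans (R : comPzRingType) (u v w : R) :
  ann_equiv u v -> ann_equiv v w -> ann_equiv u w.
Proof. by move=> h1 h2 a; split=> [/h1/h2|/h2/h1]. Qed.

Section Key.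
Variables (R : comPzRingType) (y x : R).
Hypothesis Py : prime_ideal (ann y).
Hypothesis adj : GammaE_adj x y.
Hypothesis uniq : forall z, GammaE_adj z y -> ann_equiv z x.

Lemma y_nz : y != 0.
Proof.
case: Py => _ [n1 _]; apply/eqP => y0; apply: n1; by rewrite /ann y0 mulr0.
Qed.

Lemma inP w : w != 0 -> w * y = 0 -> ann_equiv w y \/ ann_equiv w x.
Proof.
move=> wn wy; case: (classic (ann_equiv w y)) => h; first by left.
right; apply: uniq; split; last by split.
split=> //; exists y; split=> //; exact: y_nz.
Qed.

Lemma outP z : nz_zero_divisor z -> z * y != 0 ->
  forall a, a * z = 0 <-> (a = 0 \/ (a * y = 0 /\ ann_equiv a x)).
Proof.
move=> [zn [w [wn zw]]] zy.
case: Py => _ [_ pr].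
have wy : w * y = 0.
  have : ann y (z * w) by rewrite /ann zw mul0r.
  by case/pr => // h; rewrite h eqxx in zy.
have zx : z * x = 0.
  case: (inP w wn wy) => h.
    have : ann w z by rewrite /ann.
    by move/h; rewrite /ann => e; rewrite e eqxx in zy.
  by have := (h z).1 zw.
move=> a; split.
  move=> az; case: (eqVneq a 0) => [->|an]; first by left.
  right.
  have ay : a * y = 0.
    have : ann y (a * z) by rewrite /ann az mul0r.
    by case/pr => // h; rewrite h eqxx in zy.
  split=> //; case: (inP a an ay) => // h.
  have : ann a z by rewrite /ann mulrC.
  by move/h; rewrite /ann => e; rewrite e eqxx in zy.
case=> [->|[_ h]]; first by rewrite mul0r.
have : ann x z by [].
by move/(h z).2; rewrite /ann mulrC.
Qed.

Lemma classify v : nz_zero_divisor v ->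
  ann_equiv v y \/ ann_equiv v x \/ v * y != 0.
Proof.
move=> hv; case: (eqVneq (v * y) 0) => e; last by right; right.
case: hv => vn _; case: (inP v vn e); tauto.
Qed.

Lemma outs u v : nz_zero_divisor u -> nz_zero_divisor v ->
  u * y != 0 -> v * y != 0 -> ann_equiv u v.
Proof.
move=> hu hv uy vy a; rewrite /ann.
by rewrite (outP u hu uy a) (outP v hv vy a).
Qed.

End Key.

Theorem proposition3p2 (R : comPzRingType) :
  noetherian R ->
  GammaE_more_than_three_vertices R ->
  forall y : R, prime_ideal (ann y) -> ~ GammaE_leaf y.
Proof.
move=> _ [x1 [x2 [x3 [x4 [[h1 h2 h3 h4] [n12 [n13 [n14 [n23 [n24 n34]]]]]]]]]] y Py [x [adj uniq]].
have c1 := @classify R y x Py uniq _ h1.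
have c2 := @classify R y x Py uniq _ h2.
have c3 := @classify R y x Py uniq _ h3.
have c4 := @classify R y x Py uniq _ h4.
have o := @outs R y x Py uniq.
have same : forall u v w : R, ann_equiv u w -> ann_equiv v w -> ann_equiv u v.
  by move=> u v w a b c; split=> [/(a c).1/(b c).2|/(b c).1/(a c).2].
case: c1 => [a1|[a1|a1]]; case: c2 => [a2|[a2|a2]];
case: c3 => [a3|[a3|a3]]; case: c4 => [a4|[a4|a4]];
first [ apply: n12; first [exact: (same _ _ _ a1 a2) | exact: (o _ _ h1 h2 a1 a2)]
      | apply: n13; first [exact: (same _ _ _ a1 a3) | exact: (o _ _ h1 h3 a1 a3)]
      | apply: n14; first [exact: (same _ _ _ a1 a4) | exact: (o _ _ h1 h4 a1 a4)]
      | apply: n23; first [exact: (same _ _ _ a2 a3) | exact: (o _ _ h2 h3 a2 a3)]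
      | apply: n24; first [exact: (same _ _ _ a2 a4) | exact: (o _ _ h2 h4 a2 a4)]
      | apply: n34; first [exact: (same _ _ _ a3 a4) | exact: (o _ _ h3 h4 a3 a4)] ].
Qed.
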